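(* In the backward-propagation task model described in the context, suppose the computing tasks are executed in the order $E_R^{(L)},\dots,E_1^{(L)},AT_R^{(L)},\dots,AT_1^{(L)},E_R^{(L-1)},\dots,AT_1^{(L-1)},\dots,AT_1^{(1)}$ and the A2A communication tasks in the order $C_R^{(L)},\dots,C_1^{(L)},D_R^{(L)},\dots,D_1^{(L)},C_R^{(L-1)},\dots,D_1^{(L-1)},\dots,D_1^{(1)}$, and that the all-reduce communication is performed with the chunk-based priority scheduling mechanism with chunk size $S_p$. If communicating an all-reduce tensor chunk incurs no startup overhead, then the time per iteration is minimized as $S_p\to 0$.
   Context: Backward-propagation task model for one training iteration of a distributed Mixture-of-Experts transformer with $L$ transformer blocks, each with an MHA layer plus gating function and an MoE layer, whose input is split into $R$ equal parts. For block $l$ and $1\le r\le R$: $AT_r^{(l)}$ (MHA+gating computing subtask), $E_r^{(l)}$ (expert computing subtask), $D_r^{(l)}$ (dispatch all-to-all (A2A) communication subtask), $C_r^{(l)}$ (combine A2A communication subtask), and an all-reduce communication of the gradient tensor of the MHA and gating parameters of block $l$. Tasks of the same type have equal durations. There is one computing resource and one communication resource; a computing and a communication task may run simultaneously, but not two of the same kind; tasks are non-preemptive. Dependencies: $C_r^{(l-1)}$ starts after $AT_r^{(l)}$ finishes ($1<l\le L$); $E_r^{(l)}$ after $C_r^{(l)}$; $D_r^{(l)}$ after $E_r^{(l)}$; $AT_r^{(l)}$ after $D_r^{(l)}$; the all-reduce of block $l$ can start only after all $AT_r^{(l)}$ ($1\le r\le R$) finish. Chunk-based priority scheduling: the all-reduce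 gradient tensor of each block is partitioned into chunks of size $S_p$, each communicated as a separate (non-preemptive) communication task with duration proportional to its size; all pending A2A tasks and all-reduce chunks are kept in a communication pool in which A2A tasks have strictly higher priority than all-reduce chunks, i.e. an all-reduce chunk is started on the communication resource only when no A2A task is ready to execute. *)

(* Defs.v *)
From Stdlib Require Import Reals List Arith ZArith.
From Coquelicot Require Import Coquelicot.
Import ListNotations.
Open Scope R_scope.

(* computing subtasks: E l r = E_r^(l), AT l r = AT_r^(l) *)
Inductive comp_task := E (l r : nat) | AT (l r : nat).
(* A2A communication subtasks: Cm l r = C_r^(l) (combine), Dm l r = D_r^(l) (dispatch) *)
Inductive comm_task := Cm (l r : nat) | Dm (l r : nat).

Definition comp_eqb (x y : comp_task) : bool :=
  match x, y with
  | E l r, E l' r' | AT l r, AT l' r' => Nat.eqb l l' && Nat.eqb r r'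
  | _, _ => false
  end.
Definition comm_eqb (x y : comm_task) : bool :=
  match x, y with
  | Cm l r, Cm l' r' | Dm l r, Dm l' r' => Nat.eqb l l' && Nat.eqb r r'
  | _, _ => false
  end.

Definition down (n : nat) : list nat := rev (seq 1 n).

Definition comp_order (L Rp : nat) : list comp_task :=
  flat_map (fun l => map (E l) (down Rp) ++ map (AT l) (down Rp)) (down L).
Definition a2a_order (L Rp : nat) : list comm_task :=
  flat_map (fun l => map (Cm l) (down Rp) ++ map (Dm l) (down Rp)) (down L).

Definition comp_dep (c : comp_task) : comm_task :=
  match c with E l r => Cm l r | AT l r => Dm l r end.
(* D_r^(l) after E_r^(l); C_r^(l-1) after AT_r^(l) (1 < l <= L), i.e.
   C_r^(l) after AT_r^(l+1) for l < L; C_r^(L) has no predecessor *)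
Definition a2a_dep (L : nat) (a : comm_task) : option comp_task :=
  match a with
  | Dm l r => Some (E l r)
  | Cm l r => if Nat.ltb l L then Some (AT (S l) r) else None
  end.

Record durations := {
  d_AT : R;  (* MHA+gating computing subtask *)
  d_E  : R;  (* expert computing subtask *)
  d_D  : R;
  d_C  : R;
  beta : R;  (* all-reduce communication time per unit of tensor size *)
  G    : R   (* size of the all-reduce gradient tensor of one block *)
}.

Definition comp_dur (d : durations) (c : comp_task) : R :=
  match c with E _ _ => d_E d | AT _ _ => d_AT d end.
Definition comm_dur (d : durations) (a : comm_task) : R :=
  match a with Cm _ _ => d_C d | Dm _ _ => d_D d end.

Definition chunk_sizes (Gs Sp : R) : list R :=
  let n := Z.to_nat (Int_part (Gs / Sp)) in
  let rem := Gs - INR n * Sp in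
  repeat Sp n ++ (if Rlt_dec 0 rem then [rem] else []).

(* no startup overhead: duration of a chunk is proportional to its size *)
Definition chunk_durs (d : durations) (Sp : R) : list R :=
  map (fun s => beta d * s) (chunk_sizes (G d) Sp).

(** The communication resource is free at
    time [t]; the next A2A task becomes ready at time [rdy]; [q] is the FIFO
    queue of all-reduce chunks (release time, duration).  An all-reduce chunk is
    started only when no A2A task is ready; the resource never idles while
    something can run. *)
Fixpoint fill (t rdy : R) (q : list (R * R)) : R * list (R * R) :=
  if Rle_dec rdy t then (t, q) else
  match q with
  | [] => (rdy, [])
  | (rel, dur) :: q' =>
      let s := Rmax t rel in
      if Rle_dec rdy s then (rdy, q)   (* A2A ready no later than the chunk: A2A first *)
      else fill (s + dur) rdy q'
  end.

(* after the last A2A task: all remaining chunks *)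
Fixpoint flush (t : R) (q : list (R * R)) : R :=
  match q with
  | [] => t
  | (rel, dur) :: q' => flush (Rmax t rel + dur) q'
  end.

Record state := mkState {
  rem_comp : list comp_task;
  rem_comm : list comm_task;
  fin_comp : comp_task -> option R;
  fin_comm : comm_task -> option R;
  free_comp : R;
  free_comm : R;
  queue : list (R * R)
}.

Definition upd_comp (f : comp_task -> option R) c x : comp_task -> option R :=
  fun c' => if comp_eqb c c' then Some x else f c'.
Definition upd_comm (f : comm_task -> option R) a x : comm_task -> option R :=
  fun a' => if comm_eqb a a' then Some x else f a'.

(* the all-reduce of block l is released once all AT_r^(l), 1 <= r <= Rp, finished *)
Definition block_done (Rp : nat) (f : comp_task -> option R) (l : nat) : bool :=
  forallb (fun r => match f (AT l r) with Some _ => true | None => false end) (seq 1 Rp).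
Definition block_release (Rp : nat) (f : comp_task -> option R) (l : nat) : R :=
  fold_right (fun r acc => match f (AT l r) with Some x => Rmax x acc | None => acc end)
    0 (seq 1 Rp).

Definition final_time (st : state) : R :=
  Rmax (free_comp st) (flush (free_comm st) (queue st)).

(** event-driven simulation: computing tasks run in their order, each as soon
    as the computing resource is free and its predecessor has finished; A2A
    tasks run in their order, each as soon as the communication resource is free
    and its predecessor has finished, with the priority rule above for the
    interleaved all-reduce chunks. *)
Fixpoint simulate (L Rp : nat) (d : durations) (Sp : R) (fuel : nat) (st : state) : R :=
  match fuel with
  | O => final_time st
  | S fuel' =>
    let comp_step :=
      match rem_comp st with
      | c :: cs =>
          match fin_comm st (comp_dep c) with
          | Some fd =>
              let fin := Rmax (free_comp st) fd + comp_dur d c in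
              let fc := upd_comp (fin_comp st) c fin in
              let q := match c with
                       | AT l _ => if block_done Rp fc l
                                   then queue st ++ map (fun du => (block_release Rp fc l, du))
                                                        (chunk_durs d Sp)
                                   else queue st
                       | E _ _ => queue st
                       end in
              Some (mkState cs (rem_comm st) fc (fin_comm st) fin (free_comm st) q)
          | None => None
          end
      | [] => None
      end in
    match comp_step with
    | Some st' => simulate L Rp d Sp fuel' st'
    | None =>
      match rem_comm st with
      | a :: as_ =>
          let ready :=
            match a2a_dep L a with
            | None => Some 0
            | Some c => fin_comp st c
            end in
          match ready with
          | Some rdy =>
              let (start, q) := fill (free_comm st) rdy (queue st) in
              let fin := start + comm_dur d a in
              simulate L Rp d Sp fuel'
                (mkState (rem_comp st) as_ (fin_comp st) (upd_comm (fin_comm st) a fin)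
                         (free_comp st) fin q)
          | None => final_time st  (* deadlock: cannot occur for the given orders *)
          end
      | [] => final_time st
      end
    end
  end.

Definition init_state (L Rp : nat) : state :=
  mkState (comp_order L Rp) (a2a_order L Rp) (fun _ => None) (fun _ => None) 0 0 [].

Definition iteration_time (L Rp : nat) (d : durations) (Sp : R) : R :=
  simulate L Rp d Sp (4 * L * Rp + 1) (init_state L Rp).

(* Main.v *)
Require Import Defs.
From Stdlib Require Import Reals Lra Lia List Arith ZArith.
From Coquelicot Require Import Coquelicot.
From Stdlib Require Import List.
Import ListNotations.
Open Scope R_scope.

Definition ext := (state * list (R*R) * list R)%type.

Definition step (L Rp : nat) (d : durations) (Sp : R) (e : ext) : option ext :=
  let '(st, As, Bs) := e in
  let comp_step :=
      match rem_comp st with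
      | c :: cs =>
          match fin_comm st (comp_dep c) with
          | Some fd =>
              let fin := Rmax (free_comp st) fd + comp_dur d c in
              let fc := upd_comp (fin_comp st) c fin in
              let q := match c with
                       | AT l _ => if block_done Rp fc l
                                   then queue st ++ map (fun du => (block_release Rp fc l, du))
                                                        (chunk_durs d Sp)
                                   else queue st
                       | E _ _ => queue st
                       end in
              let Bs' := match c with
                       | AT l _ => if block_done Rp fc l then block_release Rp fc l :: Bs else Bs
                       | E _ _ => Bs end in
              Some (mkState cs (rem_comm st) fc (fin_comm st) fin (free_comm st) q, Bs')
          | None => None
          end
      | [] => None
      end in
  match comp_step with
  | Some (st', Bs') => Some (st', As, Bs')
  | None =>
      match rem_comm st with
      | a :: as_ =>
          let ready := match a2a_dep L a with None => Some 0 | Some c => fin_comp st c end in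
          match ready with
          | Some rdy =>
              let (start, q) := fill (free_comm st) rdy (queue st) in
              let fin := start + comm_dur d a in
              Some (mkState (rem_comp st) as_ (fin_comp st) (upd_comm (fin_comm st) a fin)
                         (free_comp st) fin q, (start, comm_dur d a) :: As, Bs)
          | None => None
          end
      | [] => None
      end
  end.

Fixpoint runI L Rp d Sp (fuel : nat) (e : ext) : ext :=
  match fuel with O => e | S f => match step L Rp d Sp e with Some e' => runI L Rp d Sp f e' | None => e end end.

Lemma sim_runI : forall L Rp d Sp fuel st As Bs,
  simulate L Rp d Sp fuel st = final_time (fst (fst (runI L Rp d Sp fuel (st, As, Bs)))).
Proof.
  induction fuel; intros st As Bs; [reflexivity|].
  simpl. unfold step.
  destruct (rem_comp st) as [|c cs] eqn:Hc.
  - destruct (rem_comm st) as [|a as_]; [reflexivity|].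
    destruct (match a2a_dep L a with None => Some 0 | Some c => fin_comp st c end) as [rdy|]; [|reflexivity].
    destruct (fill (free_comm st) rdy (queue st)) as [s q]. apply IHfuel.
  - destruct (fin_comm st (comp_dep c)) as [fd|].
    + destruct c; apply IHfuel.
    + destruct (rem_comm st) as [|a as_]; [reflexivity|].
      destruct (match a2a_dep L a with None => Some 0 | Some c => fin_comp st c end) as [rdy|]; [|reflexivity].
      destruct (fill (free_comm st) rdy (queue st)) as [s q]. apply IHfuel.
Qed.
Definition SQ (q : list (R*R)) (tau : R) : R :=
  fold_right (fun p acc => (if Rle_dec tau (fst p) then snd p else 0) + acc) 0 q.
Definition SQall (q : list (R*R)) : R := fold_right (fun p acc => snd p + acc) 0 q.
Definition SB (W : R) (Bs : list R) (tau : R) : R :=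
  fold_right (fun r acc => (if Rle_dec tau r then W else 0) + acc) 0 Bs.
Definition LBx W As Bs tau := tau + SQ As tau + SB W Bs tau.
Definition Ev (As : list (R*R)) (Bs : list R) := 0 :: map fst As ++ Bs.
Definition maxl (l : list R) := fold_right Rmax 0 l.
Definition V tau t q := Rmax t tau + SQ q tau.
Fixpoint srt (q : list (R*R)) : Prop :=
  match q with [] => True | p :: q' => Forall (fun p' => fst p <= fst p') q' /\ srt q' end.
Definition sumR (l : list R) := fold_right Rplus 0 l.

Lemma maxl_in : forall l x, In x l -> x <= maxl l.
Proof. induction l; simpl; intros x H; [contradiction|]. destruct H as [->|H].
  apply Rmax_l. eapply Rle_trans; [apply IHl; exact H| apply Rmax_r]. Qed.
Lemma maxl_ge0 : forall l, 0 <= maxl l.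
Proof. induction l; simpl; [lra|]. eapply Rle_trans; [exact IHl|apply Rmax_r]. Qed.

Lemma SQ_nonneg : forall q tau, Forall (fun p => 0 <= snd p) q -> 0 <= SQ q tau.
Proof. induction q; simpl; intros tau H; [lra|]. inversion H; subst.
  specialize (IHq tau H3). destruct Rle_dec; lra. Qed.
Lemma SQ_le_all : forall q tau, Forall (fun p => 0 <= snd p) q -> SQ q tau <= SQall q.
Proof. induction q; simpl; intros tau H; [lra|]. inversion H; subst.
  specialize (IHq tau H3). destruct Rle_dec; lra. Qed.
Lemma SQ_all_sorted : forall q r, Forall (fun p => r <= fst p) q -> SQ q r = SQall q.
Proof. induction q; simpl; intros r H; [lra|]. inversion H; subst.
  rewrite (IHq r H3). destruct Rle_dec; [lra|contradiction]. Qed.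
Lemma SB_nonneg : forall W Bs tau, 0 <= W -> 0 <= SB W Bs tau.
Proof. induction Bs; simpl; intros; [lra|]. specialize (IHBs tau H). destruct Rle_dec; lra. Qed.
Lemma SQ_app : forall q1 q2 tau, SQ (q1 ++ q2) tau = SQ q1 tau + SQ q2 tau.
Proof. induction q1; simpl; intros; [lra|]. rewrite IHq1; lra. Qed.
Lemma SQall_app : forall q1 q2, SQall (q1 ++ q2) = SQall q1 + SQall q2.
Proof. induction q1; simpl; intros; [lra|]. rewrite IHq1; lra. Qed.
Lemma SQ_chunks : forall l r tau, SQ (map (fun du => (r, du)) l) tau = if Rle_dec tau r then sumR l else 0.
Proof. induction l; simpl; intros; destruct Rle_dec; simpl; try lra; rewrite IHl; destruct Rle_dec; try lra; contradiction. Qed.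
Lemma SQall_chunks : forall l r, SQall (map (fun du => (r, du)) l) = sumR l.
Proof. induction l; simpl; intros; [lra|]. rewrite IHl; lra. Qed.

Lemma srt_app : forall q r l, srt q -> (forall p, In p q -> fst p <= r) ->
  srt (q ++ map (fun du => (r, du)) l).
Proof.
  induction q as [|p q IH]; simpl; intros r l Hs Hin.
  - induction l; simpl; [auto|]. split; [|auto]. apply Forall_forall. intros x Hx.
    apply in_map_iff in Hx. destruct Hx as [y [<- _]]. simpl; lra.
  - destruct Hs as [Hf Hs]. split; [|apply IH; auto].
    apply Forall_app; split; [exact Hf|]. apply Forall_forall. intros x Hx.
    apply in_map_iff in Hx. destruct Hx as [y [<- _]]. simpl. apply Hin; auto.
Qed.

Lemma fill_lb : forall q t rdy, Rmax t rdy <= fst (fill t rdy q).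
Proof.
  induction q as [|[rel du] q IH]; intros t rdy; simpl;
  destruct (Rle_dec rdy t); simpl; try (rewrite Rmax_left; lra); try (rewrite Rmax_right; lra).
  destruct (Rle_dec rdy (Rmax t rel)); simpl; [rewrite Rmax_right; lra|].
  eapply Rle_trans; [|apply IH]. rewrite (Rmax_right t rdy) by lra. apply Rmax_r.
Qed.
Lemma fill_ub : forall q t rdy c, 0 <= c -> (forall p, In p q -> snd p <= c) ->
  fst (fill t rdy q) <= Rmax t (rdy + c).
Proof.
  induction q as [|[rel du] q IH]; intros t rdy c Hc Hq; simpl;
  pose proof (Rmax_l t (rdy + c)); pose proof (Rmax_r t (rdy + c));
  destruct (Rle_dec rdy t); simpl; try lra.
  pose proof (Hq (rel,du) (or_introl eq_refl)) as Hd; simpl in Hd.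
  destruct (Rle_dec rdy (Rmax t rel)); simpl; [lra|].
  eapply Rle_trans; [apply IH; [exact Hc| intros; apply Hq; right; assumption]|]. apply Rmax_lub; lra.
Qed.
Lemma fill_suffix : forall q t rdy, exists pre, q = pre ++ snd (fill t rdy q).
Proof.
  induction q as [|[rel du] q IH]; intros t rdy; simpl.
  - destruct Rle_dec; exists []; reflexivity.
  - destruct Rle_dec; [exists []; reflexivity|].
    destruct Rle_dec; [exists []; reflexivity|].
    destruct (IH (Rmax t rel + du) rdy) as [pre Hp]. exists ((rel,du)::pre). simpl; congruence.
Qed.

Lemma V_chunk : forall tau t rel du q, 0 <= du ->
  V tau t ((rel,du)::q) <= V tau (Rmax t rel + du) q.
Proof.
  intros. unfold V; simpl. destruct Rle_dec.
  - assert (Rmax t tau <= Rmax t rel) by (apply Rmax_lub; [apply Rmax_l| eapply Rle_trans; [exact r|apply Rmax_r]]).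
    pose proof (Rmax_l (Rmax t rel + du) tau). lra.
  - assert (Rmax t tau <= Rmax (Rmax t rel + du) tau).
    { apply Rmax_lub; [|apply Rmax_r]. pose proof (Rmax_l t rel). eapply Rle_trans; [|apply Rmax_l]. lra. }
    lra.
Qed.

Lemma fill_V : forall q t rdy tau, Forall (fun p => 0 <= snd p) q ->
  V tau t q <= V tau (fst (fill t rdy q)) (snd (fill t rdy q)).
Proof.
  induction q as [|[rel du] q IH]; intros t rdy tau Hq; simpl.
  - destruct Rle_dec; simpl; [lra|]. unfold V; simpl.
    assert (Rmax t tau <= Rmax rdy tau) by (apply Rmax_lub; [eapply Rle_trans; [|apply Rmax_l]; lra|apply Rmax_r]). lra.
  - inversion Hq; subst. destruct Rle_dec; simpl; [lra|]. destruct Rle_dec; simpl.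
    + unfold V; simpl.
      assert (Rmax t tau <= Rmax rdy tau) by (apply Rmax_lub; [eapply Rle_trans; [|apply Rmax_l]; lra|apply Rmax_r]). lra.
    + eapply Rle_trans; [apply V_chunk; exact H1|]. apply IH; auto.
Qed.

Lemma flush_V : forall q t tau, Forall (fun p => 0 <= snd p) q -> V tau t q <= Rmax (flush t q) tau.
Proof.
  induction q as [|[rel du] q IH]; intros t tau Hq; simpl.
  - unfold V; simpl. lra.
  - inversion Hq; subst. eapply Rle_trans; [apply V_chunk; exact H1|]. apply IH; auto.
Qed.

Definition Pq W As Bs t q :=
 (exists tau, In tau (Ev As Bs) /\ tau <= t /\ t + SQall q <= LBx W As Bs tau) /\
 srt q /\ (forall x, SQ q x <= SB W Bs x) /\ (forall p, In p q -> In (fst p) Bs /\ 0 <= snd p).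

Lemma Ev_cons : forall tau s a As Bs, In tau (Ev As Bs) -> In tau (Ev ((s,a)::As) Bs).
Proof. unfold Ev; simpl; intros. destruct H; auto. Qed.
Lemma Ev_head : forall s a As Bs, In s (Ev ((s,a)::As) Bs).
Proof. unfold Ev; simpl; auto. Qed.
Lemma Ev_Bs : forall r As Bs, In r Bs -> In r (Ev As Bs).
Proof. unfold Ev; simpl; intros. right. apply in_or_app; auto. Qed.
Lemma LBx_cons : forall W s a As Bs tau,
  LBx W ((s,a)::As) Bs tau = LBx W As Bs tau + (if Rle_dec tau s then a else 0).
Proof. intros. unfold LBx; simpl. ring. Qed.
Lemma SQall_nonneg : forall q : list (R*R), (forall p, In p q -> 0 <= snd p) -> 0 <= SQall q.
Proof. induction q; simpl; intros; [lra|]. pose proof (H a (or_introl eq_refl)).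
  assert (0 <= SQall q) by (apply IHq; auto). lra. Qed.
Lemma Forall_nonneg_In : forall q : list (R*R), (forall p, In p q -> 0 <= snd p) -> Forall (fun p => 0 <= snd p) q.
Proof. intros. apply Forall_forall. auto. Qed.

Lemma P_chunk : forall W As Bs t rel du q, 0 <= W -> Forall (fun p => 0 <= snd p) As ->
  Pq W As Bs t ((rel,du)::q) -> Pq W As Bs (Rmax t rel + du) q.
Proof.
  intros W As Bs t rel du q HW HA [[tau [Hin [Ht Hle]]] [[Hf Hs] [HSB Hm]]].
  pose proof (Hm (rel,du) (or_introl eq_refl)) as [Hrel Hdu]; simpl in Hrel, Hdu.
  split; [|split; [exact Hs|split]].
  - destruct (Rle_dec rel t).
    + rewrite Rmax_left by lra. exists tau. simpl in Hle. repeat split; auto; lra.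
    + rewrite Rmax_right by lra. exists rel. split; [apply Ev_Bs; auto|split; [lra|]].
      specialize (HSB rel). simpl in HSB. destruct (Rle_dec rel rel); [|lra].
      rewrite (SQ_all_sorted q rel Hf) in HSB.
      unfold LBx. pose proof (SQ_nonneg As rel HA). lra.
  - intros x. specialize (HSB x). simpl in HSB.
    assert (0 <= (if Rle_dec x rel then du else 0)) by (destruct Rle_dec; lra). lra.
  - intros p Hp. apply Hm. right; auto.
Qed.

Lemma flush_ub : forall W As Bs q t, 0 <= W -> Forall (fun p => 0 <= snd p) As ->
  Pq W As Bs t q -> flush t q <= maxl (map (LBx W As Bs) (Ev As Bs)).
Proof.
  intros W As Bs q; induction q as [|[rel du] q IH]; intros t HW HA HP; cbn [flush].
  - destruct HP as [[tau [Hin [Ht Hle]]] _]. simpl in Hle.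
    eapply Rle_trans; [|apply maxl_in; apply in_map; exact Hin]. lra.
  - apply IH; auto. apply P_chunk; auto.
Qed.

Lemma fill_P : forall W As Bs a rdy q t, 0 <= W -> Forall (fun p => 0 <= snd p) As -> 0 <= a ->
  Pq W As Bs t q ->
  Pq W ((fst (fill t rdy q), a)::As) Bs (fst (fill t rdy q) + a) (snd (fill t rdy q)).
Proof.
  intros W As Bs a rdy q; induction q as [|[rel du] q IH]; intros t HW HA Ha HP.
  - simpl. destruct HP as [[tau [Hin [Ht Hle]]] [Hs [HSB Hm]]].
    destruct (Rle_dec rdy t); simpl.
    + split; [|split; [exact Hs|split; auto]].
      exists tau. split; [apply Ev_cons; auto|split; [lra|]].
      rewrite LBx_cons. destruct Rle_dec; [|lra]. simpl in Hle |- *. lra.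
    + split; [|split; [exact Hs|split; auto]].
      exists rdy. split; [apply Ev_head|split; [lra|]].
      rewrite LBx_cons. destruct (Rle_dec rdy rdy); [|lra]. simpl.
      unfold LBx. pose proof (SQ_nonneg As rdy HA). pose proof (SB_nonneg W Bs rdy HW). lra.
  - simpl. destruct (Rle_dec rdy t).
    + simpl. destruct HP as [[tau [Hin [Ht Hle]]] [Hs [HSB Hm]]].
      split; [|split; [exact Hs|split; auto]].
      exists tau. split; [apply Ev_cons; auto|split; [lra|]].
      rewrite LBx_cons. destruct Rle_dec; [|lra]. lra.
    + destruct (Rle_dec rdy (Rmax t rel)).
      * simpl. pose proof HP as HP'. destruct HP as [[tau [Hin [Ht Hle]]] [Hs [HSB Hm]]].
        assert (Hr : rdy <= rel).
        { destruct (Rle_dec rel t); [rewrite Rmax_left in r by lra; lra|rewrite Rmax_right in r by lra; lra]. }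
        split; [|split; [exact Hs|split; auto]].
        exists rdy. split; [apply Ev_head|split; [lra|]].
        rewrite LBx_cons. destruct (Rle_dec rdy rdy); [|lra].
        assert (Hall : Forall (fun p => rdy <= fst p) ((rel,du)::q)).
        { destruct Hs as [Hf _]. constructor; [simpl; lra|].
          eapply Forall_impl; [|exact Hf]. simpl; intros; lra. }
        rewrite <- (SQ_all_sorted _ _ Hall). specialize (HSB rdy).
        unfold LBx. pose proof (SQ_nonneg As rdy HA). lra.
      * apply IH; auto. apply P_chunk; auto.
Qed.

Lemma comp_eqb_refl : forall c, comp_eqb c c = true.
Proof. destruct c; simpl; rewrite !Nat.eqb_refl; reflexivity. Qed.
Lemma comm_eqb_refl : forall c, comm_eqb c c = true.
Proof. destruct c; simpl; rewrite !Nat.eqb_refl; reflexivity. Qed.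
Lemma comm_eqb_eq : forall a b, comm_eqb a b = true -> a = b.
Proof. destruct a, b; simpl; try discriminate; intros H; apply Bool.andb_true_iff in H;
  destruct H as [H1 H2]; apply Nat.eqb_eq in H1; apply Nat.eqb_eq in H2; subst; reflexivity. Qed.

Lemma block_release_ge_aux : forall f l rs r x, In r rs -> f (AT l r) = Some x ->
  x <= fold_right (fun r acc => match f (AT l r) with Some x => Rmax x acc | None => acc end) 0 rs.
Proof.
  induction rs; simpl; intros r x Hin Hf; [contradiction|]. destruct Hin as [->|Hin].
  - rewrite Hf. apply Rmax_l.
  - destruct (f (AT l a)); [eapply Rle_trans; [eapply IHrs; eauto|apply Rmax_r]|eapply IHrs; eauto].
Qed.
Lemma block_release_ge : forall Rp f l r x, In r (seq 1 Rp) -> f (AT l r) = Some x ->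
  x <= block_release Rp f l.
Proof. intros. unfold block_release. eapply block_release_ge_aux; eauto. Qed.
Lemma block_release_le : forall Rp f l M, 0 <= M -> (forall c x, f c = Some x -> x <= M) ->
  block_release Rp f l <= M.
Proof.
  intros Rp f l M H0 H. unfold block_release. induction (seq 1 Rp); simpl; [lra|].
  destruct (f (AT l a)) eqn:E; [|auto]. apply Rmax_lub; [eapply H; eauto|auto].
Qed.

Definition Inv Rp d Sp c (e : ext) : Prop :=
 let '(st, As, Bs) := e in
 (match rem_comp st with c0 :: _ => forall fd, fin_comm st (comp_dep c0) = Some fd -> free_comm st <= Rmax (free_comp st) fd | [] => True end) /\
 (forall c0, In c0 (rem_comp st) -> match c0 with AT _ r => In r (seq 1 Rp) | _ => True end) /\
 0 <= free_comp st /\ (forall c0 x, fin_comp st c0 = Some x -> x <= free_comp st) /\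
 (forall p, In p (queue st) -> fst p <= free_comp st /\ snd p <= c) /\
 Forall (fun p => 0 <= snd p) As /\
 Pq (sumR (chunk_durs d Sp)) As Bs (free_comm st) (queue st) /\
 (forall tau, LBx (sumR (chunk_durs d Sp)) As Bs tau <= V tau (free_comm st) (queue st)).

Definition Hyps d Sp c := 0 <= d_AT d /\ 0 <= d_E d /\ 0 <= d_C d /\ 0 <= d_D d /\
  (forall x, In x (chunk_durs d Sp) -> 0 <= x <= c).

Lemma sumR_nonneg : forall l, (forall x, In x l -> 0 <= x <= 0 \/ 0 <= x) -> 0 <= sumR l.
Proof. induction l; simpl; intros; [lra|]. assert (0 <= a) by (destruct (H a (or_introl eq_refl)); lra).
  assert (0 <= sumR l) by (apply IHl; auto). lra. Qed.
Lemma W_nonneg : forall d Sp c, Hyps d Sp c -> 0 <= sumR (chunk_durs d Sp).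
Proof. intros d Sp c H. destruct H as [_ [_ [_ [_ H]]]]. apply sumR_nonneg. intros x Hx. right. apply (H x Hx). Qed.

Lemma comm_dur_nonneg : forall d Sp c a, Hyps d Sp c -> 0 <= comm_dur d a.
Proof. intros d Sp c a H; destruct H as [? [? [? [? ?]]]]; destruct a; simpl; auto. Qed.
Lemma comp_dur_nonneg : forall d Sp c a, Hyps d Sp c -> 0 <= comp_dur d a.
Proof. intros d Sp c a H; destruct H as [? [? [? [? ?]]]]; destruct a; simpl; auto. Qed.

Lemma inv_comm : forall Rp d Sp c rc a as_ fc fm tc tm q As Bs rdy,
 Hyps d Sp c -> Inv Rp d Sp c (mkState rc (a::as_) fc fm tc tm q, As, Bs) ->
 (match rc with c0 :: _ => fm (comp_dep c0) = None | [] => True end) ->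
 Inv Rp d Sp c (mkState rc as_ fc (upd_comm fm a (fst (fill tm rdy q) + comm_dur d a)) tc
     (fst (fill tm rdy q) + comm_dur d a) (snd (fill tm rdy q)), (fst (fill tm rdy q), comm_dur d a)::As, Bs).
Proof.
  intros Rp d Sp c rc a as_ fc fm tc tm q As Bs rdy HH HI Hrc.
  pose proof (W_nonneg _ _ _ HH) as HW. pose proof (comm_dur_nonneg _ _ _ a HH) as Ha.
  simpl in HI |- *. destruct HI as [HQ [H9 [H70 [H7 [H6 [HA [HP H1]]]]]]].
  destruct (fill_suffix q tm rdy) as [pre Hpre].
  assert (Hsub : forall p, In p (snd (fill tm rdy q)) -> In p q).
  { intros p Hp. rewrite Hpre. apply in_or_app; auto. }
  assert (Hqnn : Forall (fun p => 0 <= snd p) q).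
  { apply Forall_forall. intros p Hp. destruct HP as [_ [_ [_ Hm]]]. apply (Hm p Hp). }
  split; [|split; [exact H9|split; [exact H70|split; [exact H7|split; [|split; [|split]]]]]].
  - destruct rc as [|c0 cs]; [exact I|]. intros fd Hfd. unfold upd_comm in Hfd.
    destruct (comm_eqb a (comp_dep c0)); [injection Hfd; intros; subst; apply Rmax_r|congruence].
  - intros p Hp. apply H6, Hsub, Hp.
  - constructor; auto.
  - apply fill_P; auto.
  - intros tau. rewrite LBx_cons. specialize (H1 tau).
    pose proof (fill_V q tm rdy tau Hqnn).
    set (s := fst (fill tm rdy q)) in *. set (q' := snd (fill tm rdy q)) in *.
    assert (V tau s q' + (if Rle_dec tau s then comm_dur d a else 0) <= V tau (s + comm_dur d a) q').
    { unfold V. destruct Rle_dec.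
      - rewrite (Rmax_left s) by lra. rewrite Rmax_left by lra. lra.
      - rewrite (Rmax_right s) by lra. pose proof (Rmax_r (s + comm_dur d a) tau). lra. }
    lra.
Qed.

Lemma inv_comp : forall Rp d Sp c c0 cs rm fc fm tc tm q As Bs fd,
 Hyps d Sp c -> Inv Rp d Sp c (mkState (c0::cs) rm fc fm tc tm q, As, Bs) ->
 fm (comp_dep c0) = Some fd ->
 let fin := Rmax tc fd + comp_dur d c0 in
 let fc' := upd_comp fc c0 fin in
 Inv Rp d Sp c (mkState cs rm fc' fm fin tm
   (match c0 with
    | AT l _ => if block_done Rp fc' l
                then q ++ map (fun du => (block_release Rp fc' l, du)) (chunk_durs d Sp)
                else q
    | E _ _ => q end),
   As,
   (match c0 with
    | AT l _ => if block_done Rp fc' l then block_release Rp fc' l :: Bs else Bs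
    | E _ _ => Bs end)).
Proof.
  intros Rp d Sp c c0 cs rm fc fm tc tm q As Bs fd HH HI Hfd fin fc'.
  pose proof (W_nonneg _ _ _ HH) as HW. pose proof (comp_dur_nonneg _ _ _ c0 HH) as Hdc.
  simpl in HI. destruct HI as [HQ [H9 [H70 [H7 [H6 [HA [HP H1]]]]]]].
  specialize (HQ fd Hfd).
  assert (Hfin1 : tc <= fin) by (unfold fin; pose proof (Rmax_l tc fd); lra).
  assert (Hfin2 : tm <= fin) by (unfold fin; lra).
  assert (Hfc' : forall c1 x, fc' c1 = Some x -> x <= fin).
  { intros c1 x Hx. unfold fc', upd_comp in Hx. destruct (comp_eqb c0 c1).
    - injection Hx; intros; subst; lra.
    - apply H7 in Hx. lra. }
  assert (Common : (match cs with
    | c1 :: _ => forall fd0, fm (comp_dep c1) = Some fd0 -> tm <= Rmax fin fd0 | [] => True end) /\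
    (forall c1, In c1 cs -> match c1 with AT _ r => In r (seq 1 Rp) | _ => True end) /\
    0 <= fin /\ (forall c1 x, fc' c1 = Some x -> x <= fin)).
  { split; [|split; [intros; apply H9; right; auto|split; [lra|exact Hfc']]].
    destruct cs; [exact I|]. intros. eapply Rle_trans; [exact Hfin2|apply Rmax_l]. }
  destruct Common as [C1 [C2 [C3 C4]]].
  destruct c0 as [l r|l r].
  - simpl. split; [exact C1|split; [exact C2|split; [exact C3|split; [exact C4|split; [|split; [exact HA|split; [exact HP|exact H1]]]]]]].
    intros p Hp. pose proof (H6 p Hp). lra.
  - assert (Hr : In r (seq 1 Rp)) by (apply (H9 (AT l r)); left; auto).
    destruct (block_done Rp fc' l) eqn:Hbd; simpl.
    + set (rel := block_release Rp fc' l).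
      assert (Hrel : rel = fin).
      { apply Rle_antisym.
        - apply block_release_le; auto.
        - apply (block_release_ge Rp fc' l r); auto. unfold fc', upd_comp. rewrite comp_eqb_refl. reflexivity. }
      set (W := sumR (chunk_durs d Sp)) in *.
      destruct HH as [_ [_ [_ [_ Hc]]]].
      destruct HP as [[tau [Hin [Ht Hle]]] [Hs [HSB Hm]]].
      split; [exact C1|split; [exact C2|split; [exact C3|split; [exact C4|split; [|split; [exact HA|split; [|]]]]]]].
      * intros p Hp. apply in_app_or in Hp. destruct Hp as [Hp|Hp].
        -- pose proof (H6 p Hp). lra.
        -- apply in_map_iff in Hp. destruct Hp as [du [<- Hdu]]. simpl. split; [lra|]. apply (Hc du Hdu).
      * split; [|split; [|split]].
        -- exists tau. split; [unfold Ev in *; simpl in *; destruct Hin; [auto|right; apply in_app_or in H; apply in_or_app; destruct H; [left; auto|right; right; auto]]|].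
           split; [lra|]. rewrite SQall_app, SQall_chunks. unfold LBx in *. simpl.
           destruct (Rle_dec tau rel); [|lra]. fold W. lra.
        -- apply srt_app; auto. intros p Hp. pose proof (H6 p Hp). lra.
        -- intros x. rewrite SQ_app, SQ_chunks. simpl. specialize (HSB x). fold W.
           destruct (Rle_dec x rel); lra.
        -- intros p Hp. apply in_app_or in Hp. destruct Hp as [Hp|Hp].
           ++ destruct (Hm p Hp). split; [right; auto|auto].
           ++ apply in_map_iff in Hp. destruct Hp as [du [<- Hdu]]. simpl. split; [left; auto|apply (Hc du Hdu)].
      * intros tau0. specialize (H1 tau0). unfold LBx, V in *. simpl. rewrite SQ_app, SQ_chunks.
        fold W. destruct (Rle_dec tau0 rel); lra.
    + split; [exact C1|split; [exact C2|split; [exact C3|split; [exact C4|split; [|split; [exact HA|split; [exact HP|exact H1]]]]]]].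
      intros p Hp. pose proof (H6 p Hp). lra.
Qed.

Lemma Inv_step : forall L Rp d Sp c e e', Hyps d Sp c -> step L Rp d Sp e = Some e' ->
  Inv Rp d Sp c e -> Inv Rp d Sp c e'.
Proof.
  intros L Rp d Sp c [[st As] Bs] e' HH Hs HI.
  destruct st as [rc rm fc fm tc tm q]. unfold step in Hs. simpl in Hs.
  destruct rc as [|c0 cs].
  - destruct rm as [|a as_]; [discriminate|].
    destruct (match a2a_dep L a with None => Some 0 | Some c => fc c end) as [rdy|]; [|discriminate].
    pose proof (inv_comm Rp d Sp c [] a as_ fc fm tc tm q As Bs rdy HH HI I) as X.
    destruct (fill tm rdy q) as [s q'] eqn:Hf. injection Hs; intros <-. exact X.
  - destruct (fm (comp_dep c0)) as [fd|] eqn:Hfd.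
    + pose proof (inv_comp Rp d Sp c c0 cs rm fc fm tc tm q As Bs fd HH HI Hfd) as X.
      simpl in X. destruct c0; injection Hs; intros <-; exact X.
    + destruct rm as [|a as_]; [discriminate|].
      destruct (match a2a_dep L a with None => Some 0 | Some c => fc c end) as [rdy|]; [|discriminate].
      pose proof (inv_comm Rp d Sp c (c0::cs) a as_ fc fm tc tm q As Bs rdy HH HI Hfd) as X.
      destruct (fill tm rdy q) as [s q'] eqn:Hf. injection Hs; intros <-. exact X.
Qed.

Definition close (D : R) (o o0 : option R) :=
  match o, o0 with Some x, Some x0 => x0 <= x <= x0 + D | None, None => True | _, _ => False end.

Definition Rel D (e e0 : ext) := let '(st,As,Bs) := e in let '(st0,As0,Bs0) := e0 in
 rem_comp st = rem_comp st0 /\ rem_comm st = rem_comm st0 /\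
 (forall c, close D (fin_comp st c) (fin_comp st0 c)) /\ (forall a, close D (fin_comm st a) (fin_comm st0 a)) /\
 (free_comp st0 <= free_comp st <= free_comp st0 + D) /\ (free_comm st0 <= free_comm st <= free_comm st0 + D) /\
 Forall2 (fun p p0 => snd p = snd p0 /\ fst p0 <= fst p <= fst p0 + D) As As0 /\
 Forall2 (fun r r0 => r0 <= r <= r0 + D) Bs Bs0.

Lemma close_mono : forall D D' o o0, D <= D' -> close D o o0 -> close D' o o0.
Proof. intros D D' [x|] [x0|]; simpl; auto; lra. Qed.

Lemma Rmax_close : forall D x x0 y y0, x0 <= x <= x0 + D -> y0 <= y <= y0 + D ->
  Rmax x0 y0 <= Rmax x y <= Rmax x0 y0 + D.
Proof. intros. unfold Rmax. repeat destruct Rle_dec; lra. Qed.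

Lemma block_done_eq : forall D Rp f f0 l, (forall c, close D (f c) (f0 c)) ->
  block_done Rp f l = block_done Rp f0 l.
Proof.
  intros D Rp f f0 l H. unfold block_done. induction (seq 1 Rp); simpl; auto.
  rewrite IHl0. specialize (H (AT l a)). destruct (f (AT l a)), (f0 (AT l a)); simpl in *; tauto.
Qed.
Lemma block_release_close : forall D Rp f f0 l, 0 <= D -> (forall c, close D (f c) (f0 c)) ->
  block_release Rp f0 l <= block_release Rp f l <= block_release Rp f0 l + D.
Proof.
  intros D Rp f f0 l HD H. unfold block_release. induction (seq 1 Rp); simpl; [lra|].
  specialize (H (AT l a)). destruct (f (AT l a)), (f0 (AT l a)); simpl in *; try tauto.
  apply Rmax_close; auto.
Qed.

Lemma rel_comm : forall D c rc a as_ fc fm tc tm q As Bs fc0 fm0 tc0 tm0 q0 As0 Bs0 rdy rdy0 d d0,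
 0 <= D -> 0 <= c -> (forall p, In p q -> snd p <= c) -> (forall p, In p q0 -> snd p <= 0) ->
 rdy0 <= rdy <= rdy0 + D -> comm_dur d a = comm_dur d0 a ->
 Rel D (mkState rc (a::as_) fc fm tc tm q, As, Bs) (mkState rc (a::as_) fc0 fm0 tc0 tm0 q0, As0, Bs0) ->
 Rel (D + c) (mkState rc as_ fc (upd_comm fm a (fst (fill tm rdy q) + comm_dur d a)) tc
     (fst (fill tm rdy q) + comm_dur d a) (snd (fill tm rdy q)), (fst (fill tm rdy q), comm_dur d a)::As, Bs)
   (mkState rc as_ fc0 (upd_comm fm0 a (fst (fill tm0 rdy0 q0) + comm_dur d0 a)) tc0
     (fst (fill tm0 rdy0 q0) + comm_dur d0 a) (snd (fill tm0 rdy0 q0)), (fst (fill tm0 rdy0 q0), comm_dur d0 a)::As0, Bs0).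
Proof.
  intros D c rc a as_ fc fm tc tm q As Bs fc0 fm0 tc0 tm0 q0 As0 Bs0 rdy rdy0 d d0 HD Hc Hq Hq0 Hr Hdur HR.
  simpl in HR |- *. destruct HR as [_ [_ [Hfc [Hfm [Htc [Htm [HAs HBs]]]]]]].
  pose proof (fill_lb q tm rdy). pose proof (fill_ub q tm rdy c Hc Hq).
  pose proof (fill_lb q0 tm0 rdy0). pose proof (fill_ub q0 tm0 rdy0 0 (Rle_refl 0) Hq0).
  rewrite Rplus_0_r in H2.
  assert (Hs : fst (fill tm0 rdy0 q0) <= fst (fill tm rdy q) <= fst (fill tm0 rdy0 q0) + (D + c)).
  { pose proof (Rmax_close D tm tm0 rdy rdy0 Htm Hr).
    assert (Rmax tm (rdy + c) <= Rmax tm rdy + c) by (unfold Rmax; repeat destruct Rle_dec; lra).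
    assert (fst (fill tm0 rdy0 q0) = Rmax tm0 rdy0) by lra. lra. }
  rewrite <- Hdur.
  split; [reflexivity|split; [reflexivity|split; [|split; [|split; [|split; [|split]]]]]].
  - intros c1. apply (close_mono D); [lra|auto].
  - intros a1. unfold upd_comm. destruct (comm_eqb a a1); simpl; [lra|]. apply (close_mono D); [lra|auto].
  - lra.
  - lra.
  - constructor; [simpl; split; [reflexivity|lra]|].
    eapply Forall2_impl; [|exact HAs]. simpl; intros; lra.
  - eapply Forall2_impl; [|exact HBs]. simpl; intros; lra.
Qed.

Lemma rel_comp : forall D c Rp d d0 Sp Sp0 c0 cs rm fc fm tc tm q As Bs fc0 fm0 tc0 tm0 q0 As0 Bs0 fd fd0,
 0 <= D -> 0 <= c -> fd0 <= fd <= fd0 + D -> comp_dur d c0 = comp_dur d0 c0 ->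
 Rel D (mkState (c0::cs) rm fc fm tc tm q, As, Bs) (mkState (c0::cs) rm fc0 fm0 tc0 tm0 q0, As0, Bs0) ->
 let fin := Rmax tc fd + comp_dur d c0 in
 let fc' := upd_comp fc c0 fin in
 let fin0 := Rmax tc0 fd0 + comp_dur d0 c0 in
 let fc0' := upd_comp fc0 c0 fin0 in
 Rel (D + c) (mkState cs rm fc' fm fin tm
   (match c0 with
    | AT l _ => if block_done Rp fc' l
                then q ++ map (fun du => (block_release Rp fc' l, du)) (chunk_durs d Sp)
                else q
    | E _ _ => q end),
   As,
   (match c0 with
    | AT l _ => if block_done Rp fc' l then block_release Rp fc' l :: Bs else Bs
    | E _ _ => Bs end))
  (mkState cs rm fc0' fm0 fin0 tm0
   (match c0 with
    | AT l _ => if block_done Rp fc0' l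
                then q0 ++ map (fun du => (block_release Rp fc0' l, du)) (chunk_durs d0 Sp0)
                else q0
    | E _ _ => q0 end),
   As0,
   (match c0 with
    | AT l _ => if block_done Rp fc0' l then block_release Rp fc0' l :: Bs0 else Bs0
    | E _ _ => Bs0 end)).
Proof.
  intros D c Rp d d0 Sp Sp0 c0 cs rm fc fm tc tm q As Bs fc0 fm0 tc0 tm0 q0 As0 Bs0 fd fd0 HD Hc Hfd Hdur HR
    fin fc' fin0 fc0'.
  simpl in HR. destruct HR as [_ [_ [Hfc [Hfm [Htc [Htm [HAs HBs]]]]]]].
  assert (Hfin : fin0 <= fin <= fin0 + D).
  { unfold fin, fin0. rewrite Hdur. pose proof (Rmax_close D tc tc0 fd fd0 Htc Hfd). lra. }
  assert (Hfc' : forall c1, close D (fc' c1) (fc0' c1)).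
  { intros c1. unfold fc', fc0', upd_comp. destruct (comp_eqb c0 c1); simpl; auto. }
  assert (HAs' : Forall2 (fun p p0 => snd p = snd p0 /\ fst p0 <= fst p <= fst p0 + (D + c)) As As0).
  { eapply Forall2_impl; [|exact HAs]. simpl; intros; lra. }
  assert (HBs' : Forall2 (fun r r0 => r0 <= r <= r0 + (D + c)) Bs Bs0).
  { eapply Forall2_impl; [|exact HBs]. simpl; intros; lra. }
  assert (Hcommon : (forall c1, close (D + c) (fc' c1) (fc0' c1)) /\ (forall a, close (D + c) (fm a) (fm0 a))
     /\ fin0 <= fin <= fin0 + (D + c) /\ tm0 <= tm <= tm0 + (D + c)).
  { split; [intros; apply (close_mono D); [lra|auto]|split; [intros; apply (close_mono D); [lra|auto]|lra]]. }
  destruct Hcommon as [K1 [K2 [K3 K4]]].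
  destruct c0 as [l r|l r]; simpl.
  - repeat (split; [solve [auto]|]). auto.
  - rewrite (block_done_eq D Rp fc' fc0' l Hfc').
    destruct (block_done Rp fc0' l); simpl.
    + repeat (split; [solve [auto]|]). constructor; [|exact HBs'].
      pose proof (block_release_close D Rp fc' fc0' l HD Hfc'). lra.
    + repeat (split; [solve [auto]|]). auto.
Qed.

Lemma Rel_step : forall L Rp d d0 Sp Sp0 c D e e0,
  Hyps d Sp c -> Hyps d0 Sp0 0 -> 0 <= c -> 0 <= D ->
  (forall x, comp_dur d x = comp_dur d0 x) -> (forall x, comm_dur d x = comm_dur d0 x) ->
  Inv Rp d Sp c e -> Inv Rp d0 Sp0 0 e0 -> Rel D e e0 ->
  match step L Rp d Sp e, step L Rp d0 Sp0 e0 with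
  | Some e', Some e0' => Rel (D + c) e' e0'
  | None, None => True
  | _, _ => False end.
Proof.
  intros L Rp d d0 Sp Sp0 c D [[st As] Bs] [[st0 As0] Bs0] HH HH0 Hc HD Hcd Hmd HI HI0 HR.
  destruct st as [rc rm fc fm tc tm q]. destruct st0 as [rc0 rm0 fc0 fm0 tc0 tm0 q0].
  pose proof HR as HR'. simpl in HR'. destruct HR' as [Erc [Erm [Hfc [Hfm _]]]]. subst rc0 rm0.
  assert (Hq : forall p, In p q -> snd p <= c) by (intros p Hp; simpl in HI; destruct HI as [_ [_ [_ [_ [H6 _]]]]]; apply (H6 p Hp)).
  assert (Hq0 : forall p, In p q0 -> snd p <= 0) by (intros p Hp; simpl in HI0; destruct HI0 as [_ [_ [_ [_ [H6 _]]]]]; apply (H6 p Hp)).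
  assert (Hcomm : forall a as_, rm = a :: as_ ->
    (match rc with c0 :: _ => fm (comp_dep c0) = None | [] => True end) ->
    match (match rm with a :: as_ =>
          match (match a2a_dep L a with None => Some 0 | Some c => fc c end) with
          | Some rdy => let (start, q1) := fill tm rdy q in
              Some (mkState rc as_ fc (upd_comm fm a (start + comm_dur d a)) tc (start + comm_dur d a) q1,
                    (start, comm_dur d a) :: As, Bs)
          | None => None end
        | [] => None end),
        (match rm with a :: as_ =>
          match (match a2a_dep L a with None => Some 0 | Some c => fc0 c end) with
          | Some rdy => let (start, q1) := fill tm0 rdy q0 in
              Some (mkState rc as_ fc0 (upd_comm fm0 a (start + comm_dur d0 a)) tc0 (start + comm_dur d0 a) q1,
                    (start, comm_dur d0 a) :: As0, Bs0)
          | None => None end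
        | [] => None end) with
    | Some e', Some e0' => Rel (D + c) e' e0'
    | None, None => True
    | _, _ => False end).
  { intros a as_ -> _.
    assert (Hrdy : close D (match a2a_dep L a with None => Some 0 | Some c => fc c end)
                           (match a2a_dep L a with None => Some 0 | Some c => fc0 c end)).
    { destruct (a2a_dep L a); [apply Hfc|simpl; lra]. }
    destruct (match a2a_dep L a with None => Some 0 | Some c => fc c end) as [rdy|];
    destruct (match a2a_dep L a with None => Some 0 | Some c => fc0 c end) as [rdy0|]; simpl in Hrdy; try tauto.
    pose proof (rel_comm D c rc a as_ fc fm tc tm q As Bs fc0 fm0 tc0 tm0 q0 As0 Bs0 rdy rdy0 d d0
       HD Hc Hq Hq0 Hrdy (Hmd a) HR) as X.
    destruct (fill tm rdy q) as [s q'] eqn:Hf. destruct (fill tm0 rdy0 q0) as [s0 q0'] eqn:Hf0.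
    simpl in X. exact X. }
  unfold step. simpl.
  destruct rc as [|c0 cs].
  - destruct rm as [|a as_]; [exact I|]. apply (Hcomm a as_ eq_refl I).
  - pose proof (Hfm (comp_dep c0)) as Hd.
    destruct (fm (comp_dep c0)) as [fd|] eqn:Efd; destruct (fm0 (comp_dep c0)) as [fd0|] eqn:Efd0;
      simpl in Hd; try tauto.
    + pose proof (rel_comp D c Rp d d0 Sp Sp0 c0 cs rm fc fm tc tm q As Bs fc0 fm0 tc0 tm0 q0 As0 Bs0 fd fd0
        HD Hc Hd (Hcd c0) HR) as X.
      simpl in X. destruct c0; exact X.
    + destruct rm as [|a as_]; [exact I|]. apply (Hcomm a as_ eq_refl eq_refl).
Qed.

Definition Inv2 (e : ext) := let '(st,As,Bs) := e in
  (forall p, In p As -> fst p <= free_comm st) /\ (forall r, In r Bs -> r <= free_comp st).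

Lemma Inv2_step : forall L Rp d Sp c e e', Hyps d Sp c -> step L Rp d Sp e = Some e' ->
  Inv Rp d Sp c e -> Inv2 e -> Inv2 e'.
Proof.
  intros L Rp d Sp c [[st As] Bs] e' HH Hs HI [HA HB].
  destruct st as [rc rm fc fm tc tm q]. unfold step in Hs. simpl in Hs, HA, HB.
  simpl in HI. destruct HI as [HQ [H9 [H70 [H7 _]]]].
  assert (Hcomm : forall a as_ rdy, Inv2 (mkState rc as_ fc (upd_comm fm a (fst (fill tm rdy q) + comm_dur d a)) tc
     (fst (fill tm rdy q) + comm_dur d a) (snd (fill tm rdy q)), (fst (fill tm rdy q), comm_dur d a)::As, Bs)).
  { intros a as_ rdy. simpl. pose proof (comm_dur_nonneg _ _ _ a HH). pose proof (fill_lb q tm rdy).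
    pose proof (Rmax_l tm rdy). split; auto.
    intros p [<-|Hp]; simpl; [lra|]. pose proof (HA p Hp). lra. }
  destruct rc as [|c0 cs].
  - destruct rm as [|a as_]; [discriminate|].
    destruct (match a2a_dep L a with None => Some 0 | Some c => fc c end) as [rdy|]; [|discriminate].
    pose proof (Hcomm a as_ rdy) as X.
    destruct (fill tm rdy q) as [s q'] eqn:Hf. injection Hs; intros <-. exact X.
  - destruct (fm (comp_dep c0)) as [fd|] eqn:Hfd.
    + set (fin := Rmax tc fd + comp_dur d c0) in *.
      pose proof (comp_dur_nonneg _ _ _ c0 HH). pose proof (Rmax_l tc fd).
      assert (Hfc' : forall c1 x, upd_comp fc c0 fin c1 = Some x -> x <= fin).
      { intros c1 x Hx. unfold upd_comp in Hx. destruct (comp_eqb c0 c1).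
        - injection Hx; intros; subst; lra.
        - apply H7 in Hx. unfold fin. lra. }
      assert (HB' : forall r, In r Bs -> r <= fin) by (intros r Hr; pose proof (HB r Hr); unfold fin; lra).
      destruct c0 as [l r|l r]; [injection Hs; intros <-; simpl; auto|].
      destruct (block_done Rp (upd_comp fc (AT l r) fin) l); injection Hs; intros <-; simpl; split; auto.
      intros r0 [<-|Hr]; auto. apply block_release_le; [unfold fin; lra|exact Hfc'].
    + destruct rm as [|a as_]; [discriminate|].
      destruct (match a2a_dep L a with None => Some 0 | Some c => fc c end) as [rdy|]; [|discriminate].
      pose proof (Hcomm a as_ rdy) as X.
      destruct (fill tm rdy q) as [s q'] eqn:Hf. injection Hs; intros <-. exact X.
Qed.

Lemma Rel_mono : forall D D' e e0, D <= D' -> Rel D e e0 -> Rel D' e e0.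
Proof.
  intros D D' [[st As] Bs] [[st0 As0] Bs0] HD HR. simpl in *.
  destruct HR as [H1 [H2 [H3 [H4 [H5 [H6 [H7 H8]]]]]]].
  repeat split; auto; try lra.
  - intros c; apply (close_mono D); auto.
  - intros c; apply (close_mono D); auto.
  - eapply Forall2_impl; [|exact H7]. simpl; intros; lra.
  - eapply Forall2_impl; [|exact H8]. simpl; intros; lra.
Qed.

Lemma run_rel : forall L Rp d d0 Sp Sp0 c fuel e e0 D,
  Hyps d Sp c -> Hyps d0 Sp0 0 -> 0 <= c -> 0 <= D ->
  (forall x, comp_dur d x = comp_dur d0 x) -> (forall x, comm_dur d x = comm_dur d0 x) ->
  Inv Rp d Sp c e -> Inv2 e -> Inv Rp d0 Sp0 0 e0 -> Rel D e e0 ->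
  Rel (D + INR fuel * c) (runI L Rp d Sp fuel e) (runI L Rp d0 Sp0 fuel e0) /\
  Inv Rp d Sp c (runI L Rp d Sp fuel e) /\ Inv2 (runI L Rp d Sp fuel e).
Proof.
  intros L Rp d d0 Sp Sp0 c fuel. induction fuel; intros e e0 D HH HH0 Hc HD Hcd Hmd HI HI2 HI0 HR.
  - simpl. rewrite Rmult_0_l, Rplus_0_r. auto.
  - simpl runI. pose proof (Rel_step L Rp d d0 Sp Sp0 c D e e0 HH HH0 Hc HD Hcd Hmd HI HI0 HR) as X.
    rewrite S_INR.
    destruct (step L Rp d Sp e) as [e'|] eqn:Hs; destruct (step L Rp d0 Sp0 e0) as [e0'|] eqn:Hs0; try tauto.
    + destruct (IHfuel e' e0' (D + c) HH HH0 Hc ltac:(lra) Hcd Hmd (Inv_step L Rp d Sp c e e' HH Hs HI)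
        (Inv2_step L Rp d Sp c e e' HH Hs HI HI2) (Inv_step L Rp d0 Sp0 0 e0 e0' HH0 Hs0 HI0) X) as [A [B C]].
      split; auto. replace (D + (INR fuel + 1) * c) with (D + c + INR fuel * c) by ring. exact A.
    + split; auto. eapply Rel_mono; [|exact HR]. pose proof (pos_INR fuel). nra.
Qed.

Lemma SQ_pair_ge : forall D As As0 tau,
  Forall2 (fun p p0 => snd p = snd p0 /\ fst p0 <= fst p <= fst p0 + D) As As0 ->
  Forall (fun p => 0 <= snd p) As -> SQ As0 tau <= SQ As tau.
Proof.
  intros D As As0 tau H. induction H; simpl; intros HA; [lra|]. inversion HA as [|? ? Hx0 Hl0]; subst.
  specialize (IHForall2 Hl0). destruct H as [Hs Hf].
  destruct (Rle_dec tau (fst y)); destruct (Rle_dec tau (fst x)); lra.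
Qed.
Lemma SB_pair_ge : forall D W Bs Bs0 tau, 0 <= W ->
  Forall2 (fun r r0 => r0 <= r <= r0 + D) Bs Bs0 -> SB W Bs0 tau <= SB W Bs tau.
Proof.
  intros D W Bs Bs0 tau HW H. induction H; simpl; [lra|].
  destruct (Rle_dec tau y); destruct (Rle_dec tau x); lra.
Qed.

Lemma SQ_pair_le : forall D As As0 tau' tau,
  Forall2 (fun p p0 => snd p = snd p0 /\ fst p0 <= fst p <= fst p0 + D) As As0 ->
  Forall (fun p => 0 <= snd p) As ->
  (forall y, In y (map fst As0) -> tau' - D <= y -> tau <= y) -> SQ As tau' <= SQ As0 tau.
Proof.
  intros D As As0 tau' tau H. induction H; simpl; intros HA Hy; [lra|]. inversion HA as [|? ? Hx0 Hl0]; subst.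
  assert (IH : SQ l tau' <= SQ l' tau) by (apply IHForall2; auto).
  destruct H as [Hs Hf].
  destruct (Rle_dec tau' (fst x)).
  - assert (tau <= fst y) by (apply Hy; [left; auto|lra]).
    destruct (Rle_dec tau (fst y)); [lra|contradiction].
  - destruct (Rle_dec tau (fst y)); lra.
Qed.
Lemma SB_pair_le : forall D W Bs Bs0 tau' tau, 0 <= W ->
  Forall2 (fun r r0 => r0 <= r <= r0 + D) Bs Bs0 ->
  (forall y, In y Bs0 -> tau' - D <= y -> tau <= y) -> SB W Bs tau' <= SB W Bs0 tau.
Proof.
  intros D W Bs Bs0 tau' tau HW H. induction H; simpl; intros Hy; [lra|].
  assert (IH : SB W l tau' <= SB W l' tau) by (apply IHForall2; auto).
  destruct (Rle_dec tau' x).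
  - assert (tau <= y) by (apply Hy; [left; auto|lra]).
    destruct (Rle_dec tau y); [lra|contradiction].
  - destruct (Rle_dec tau y); lra.
Qed.

Lemma exists_min : forall (X0 : list R) m, (exists y, In y X0 /\ m <= y) ->
  exists tau, In tau X0 /\ m <= tau /\ forall y, In y X0 -> m <= y -> tau <= y.
Proof.
  induction X0 as [|a l IH]; intros m [y [Hy Hm]]; [contradiction|].
  destruct (Classical_Prop.classic (exists y, In y l /\ m <= y)) as [Hl|Hl].
  - destruct (IH m Hl) as [t [Ht [Hmt Hall]]].
    destruct (Rle_dec m a) as [Ha|Ha].
    + destruct (Rle_dec a t).
      * exists a. split; [left; auto|split; auto]. intros z [<-|Hz] Hmz; [lra|]. pose proof (Hall z Hz Hmz). lra.
      * exists t. split; [right; auto|split; auto]. intros z [<-|Hz] Hmz; [lra|]. auto.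
    + exists t. split; [right; auto|split; auto]. intros z [<-|Hz] Hmz; [lra|]. auto.
  - destruct Hy as [<-|Hy]; [|exfalso; apply Hl; eauto].
    exists a. split; [left; auto|split; auto]. intros z [<-|Hz] Hmz; [lra|]. exfalso; apply Hl; eauto.
Qed.

Lemma pair_witness : forall D (X X0 : list R), Forall2 (fun r r0 => r0 <= r <= r0 + D) X X0 ->
  forall x, In x X -> exists y, In y X0 /\ x - D <= y.
Proof.
  intros D X X0 H. induction H; intros z Hz; [contradiction|].
  destruct Hz as [<-|Hz]; [exists y; split; [left; auto|lra]|].
  destruct (IHForall2 z Hz) as [w [Hw Hw']]. exists w; split; [right; auto|auto].
Qed.
Lemma pair_none_SQ : forall D As As0 tau',
  Forall2 (fun p p0 => snd p = snd p0 /\ fst p0 <= fst p <= fst p0 + D) As As0 ->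
  (forall y, In y (map fst As0) -> ~ tau' - D <= y) -> SQ As tau' <= 0.
Proof.
  intros D As As0 tau' H. induction H; simpl; intros Hy; [lra|].
  assert (IH : SQ l tau' <= 0) by (apply IHForall2; auto).
  destruct H as [Hs Hf]. destruct (Rle_dec tau' (fst x)); [|lra].
  exfalso. apply (Hy (fst y)); [left; auto|lra].
Qed.
Lemma pair_none_SB : forall D W Bs Bs0 tau',
  Forall2 (fun r r0 => r0 <= r <= r0 + D) Bs Bs0 ->
  (forall y, In y Bs0 -> ~ tau' - D <= y) -> SB W Bs tau' <= 0.
Proof.
  intros D W Bs Bs0 tau' H. induction H; simpl; intros Hy; [lra|].
  assert (IH : SB W l tau' <= 0) by (apply IHForall2; auto).
  destruct (Rle_dec tau' x); [|lra].
  exfalso. apply (Hy y); [left; auto|lra].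
Qed.
Lemma Forall2_map_fst : forall D (As As0 : list (R*R)),
  Forall2 (fun p p0 => snd p = snd p0 /\ fst p0 <= fst p <= fst p0 + D) As As0 ->
  Forall2 (fun r r0 => r0 <= r <= r0 + D) (map fst As) (map fst As0).
Proof. intros D As As0 H. induction H; simpl; constructor; auto. tauto. Qed.

Lemma maxl_le : forall l M, 0 <= M -> (forall x, In x l -> x <= M) -> maxl l <= M.
Proof. induction l; simpl; intros; [lra|]. apply Rmax_lub; auto. Qed.

Lemma LBx_upper : forall D W As Bs As0 Bs0 tau', 0 <= W -> 0 <= D ->
  Forall2 (fun p p0 => snd p = snd p0 /\ fst p0 <= fst p <= fst p0 + D) As As0 ->
  Forall2 (fun r r0 => r0 <= r <= r0 + D) Bs Bs0 ->
  Forall (fun p => 0 <= snd p) As ->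
  In tau' (Ev As Bs) ->
  LBx W As Bs tau' <= maxl (map (LBx W As0 Bs0) (Ev As0 Bs0)) + D.
Proof.
  intros D W As Bs As0 Bs0 tau' HW HD HA HB HAn Hin.
  pose proof (maxl_ge0 (map (LBx W As0 Bs0) (Ev As0 Bs0))) as H0.
  destruct (Classical_Prop.classic (exists y, In y (map fst As0 ++ Bs0) /\ tau' - D <= y)) as [Hex|Hno].
  - destruct (exists_min _ _ Hex) as [tau [Ht [Hmt Hall]]].
    assert (H1 : SQ As tau' <= SQ As0 tau).
    { apply (SQ_pair_le D); auto. intros y Hy Hy'. apply Hall; auto. apply in_or_app; auto. }
    assert (H2 : SB W Bs tau' <= SB W Bs0 tau).
    { apply (SB_pair_le D); auto. intros y Hy Hy'. apply Hall; auto. apply in_or_app; auto. }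
    assert (H3 : LBx W As0 Bs0 tau <= maxl (map (LBx W As0 Bs0) (Ev As0 Bs0))).
    { apply maxl_in. apply in_map. unfold Ev. right; auto. }
    unfold LBx in *. lra.
  - assert (H1 : SQ As tau' <= 0).
    { apply (pair_none_SQ D _ As0); auto. intros y Hy Hy'. apply Hno. exists y. split; auto. apply in_or_app; auto. }
    assert (H2 : SB W Bs tau' <= 0).
    { apply (pair_none_SB D _ _ Bs0); auto. intros y Hy Hy'. apply Hno. exists y. split; auto. apply in_or_app; auto. }
    unfold Ev in Hin. destruct Hin as [<-|Hin].
    + unfold LBx in *. lra.
    + exfalso. apply Hno. eapply pair_witness; [|exact Hin].
      apply Forall2_app; [apply (Forall2_map_fst D); auto|auto].
Qed.

Lemma sumR_repeat : forall x n, sumR (repeat x n) = INR n * x.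
Proof. induction n; simpl repeat; simpl sumR; [simpl; lra|]. rewrite IHn, S_INR. ring. Qed.
Lemma sumR_app : forall l1 l2, sumR (l1 ++ l2) = sumR l1 + sumR l2.
Proof. induction l1; simpl; intros; [lra|]. rewrite IHl1; lra. Qed.
Lemma sumR_map_mul : forall b l, sumR (map (fun s => b * s) l) = b * sumR l.
Proof. induction l; simpl; [lra|]. rewrite IHl; ring. Qed.

Lemma chunk_facts : forall Gs Sp, 0 < Sp -> 0 <= Gs ->
  (forall s, In s (chunk_sizes Gs Sp) -> 0 <= s <= Sp) /\ sumR (chunk_sizes Gs Sp) = Gs.
Proof.
  intros Gs Sp HSp HG. unfold chunk_sizes.
  set (z := Int_part (Gs / Sp)).
  destruct (base_Int_part (Gs / Sp)) as [H1 H2]. fold z in H1, H2.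
  assert (Hq : 0 <= Gs / Sp) by (apply Rdiv_le_0_compat; lra).
  assert (Hz : (0 <= z)%Z).
  { assert (H3 : -1 < IZR z) by lra. change (-1) with (IZR (-1)) in H3. apply lt_IZR in H3. lia. }
  assert (Hn : INR (Z.to_nat z) = IZR z) by (rewrite INR_IZR_INZ, Z2Nat.id; auto).
  set (n := Z.to_nat z) in *.
  assert (Hle : INR n * Sp <= Gs).
  { rewrite Hn. apply (Rmult_le_compat_r Sp) in H1; [|lra]. unfold Rdiv in H1.
    rewrite Rmult_assoc, Rinv_l, Rmult_1_r in H1 by lra. exact H1. }
  assert (Hgt : Gs - INR n * Sp < Sp).
  { rewrite Hn. assert (Gs / Sp - 1 < IZR z) by lra.
    apply (Rmult_lt_compat_r Sp) in H; [|lra]. unfold Rdiv in H.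
    rewrite Rmult_minus_distr_r, Rmult_assoc, Rinv_l, Rmult_1_r in H by lra. lra. }
  split.
  - intros s Hs. apply in_app_or in Hs. destruct Hs as [Hs|Hs].
    + apply repeat_spec in Hs. lra.
    + destruct (Rlt_dec 0 (Gs - INR n * Sp)); [|contradiction].
      destruct Hs as [<-|[]]. lra.
  - rewrite sumR_app, sumR_repeat.
    destruct (Rlt_dec 0 (Gs - INR n * Sp)); simpl; lra.
Qed.

Lemma init_Inv : forall L Rp d Sp c, Inv Rp d Sp c (init_state L Rp, [], []).
Proof.
  intros. unfold init_state. simpl.
  split; [destruct (comp_order L Rp); [exact I|intros fd H; discriminate]|].
  split.
  { intros c0 Hc0. unfold comp_order in Hc0. apply in_flat_map in Hc0. destruct Hc0 as [l [_ Hl]].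
    apply in_app_or in Hl. unfold down in Hl. destruct Hl as [Hl|Hl]; apply in_map_iff in Hl;
    destruct Hl as [r [<- Hr]]; auto. apply in_rev in Hr. exact Hr. }
  split; [lra|]. split; [intros; discriminate|]. split; [intros p []|]. split; [constructor|].
  split.
  - split; [exists 0; split; [left; auto|split; [lra|unfold LBx; simpl; lra]]|].
    split; [exact I|]. split; [intros; simpl; lra|intros p []].
  - intros tau. unfold LBx, V; simpl. pose proof (Rmax_r 0 tau). lra.
Qed.
Lemma init_Inv2 : forall L Rp, Inv2 (init_state L Rp, [], []).
Proof. intros; simpl; split; intros ? []. Qed.
Lemma init_Rel : forall L Rp, Rel 0 (init_state L Rp, [], []) (init_state L Rp, [], []).
Proof. intros; simpl. repeat split; try lra; try constructor; intros; simpl; exact I. Qed.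

Lemma flush_ge : forall q t, Forall (fun p => 0 <= snd p) q -> t <= flush t q.
Proof.
  induction q as [|[rel du] q IH]; intros t Hq; simpl; [lra|]. inversion Hq as [|? ? Hx Hl]; subst.
  simpl in Hx. eapply Rle_trans; [|apply IH; auto]. pose proof (Rmax_l t rel). lra.
Qed.
Lemma pair_witness_rev : forall D (X X0 : list R), Forall2 (fun r r0 => r0 <= r <= r0 + D) X X0 ->
  forall y, In y X0 -> exists x, In x X /\ y <= x.
Proof.
  intros D X X0 H. induction H; intros z Hz; [contradiction|].
  destruct Hz as [<-|Hz]; [exists x; split; [left; auto|lra]|].
  destruct (IHForall2 z Hz) as [w [Hw Hw']]. exists w; split; [right; auto|auto].
Qed.

Definition d0 (d : durations) : durations :=
  {| d_AT := d_AT d; d_E := d_E d; d_D := d_D d; d_C := d_C d; beta := 0; G := G d |}.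

Definition Phi L Rp d :=
  let '(st0, As0, Bs0) := runI L Rp (d0 d) 1 (4 * L * Rp + 1) (init_state L Rp, [], []) in
  Rmax (free_comp st0) (maxl (map (LBx (beta d * G d) As0 Bs0) (Ev As0 Bs0))).

Lemma bounds : forall L Rp d Sp, 0 < Sp -> 0 < beta d -> 0 < G d ->
  0 < d_AT d -> 0 < d_E d -> 0 < d_D d -> 0 < d_C d ->
  Phi L Rp d <= iteration_time L Rp d Sp <=
  Phi L Rp d + INR (4 * L * Rp + 1) * (beta d * Sp).
Proof.
  intros L Rp d Sp HSp Hb HG H1 H2 H3 H4.
  set (N := (4 * L * Rp + 1)%nat).
  set (c := beta d * Sp).
  destruct (chunk_facts (G d) Sp HSp ltac:(lra)) as [Hcs Hsum].
  assert (HH : Hyps d Sp c).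
  { unfold Hyps. split; [lra|split; [lra|split; [lra|split; [lra|]]]]. intros x Hx. unfold chunk_durs in Hx.
    apply in_map_iff in Hx. destruct Hx as [s [<- Hs]]. apply Hcs in Hs. unfold c. nra. }
  assert (HH0 : Hyps (d0 d) 1 0).
  { unfold Hyps, d0; simpl. split; [lra|split; [lra|split; [lra|split; [lra|]]]]; intros x Hx; unfold chunk_durs in Hx;
    apply in_map_iff in Hx; destruct Hx as [s [<- _]]; simpl; lra. }
  assert (HW : sumR (chunk_durs d Sp) = beta d * G d).
  { unfold chunk_durs. rewrite sumR_map_mul, Hsum. reflexivity. }
  assert (Hc : 0 <= c) by (unfold c; nra).
  destruct (run_rel L Rp d (d0 d) Sp 1 c N (init_state L Rp, [], []) (init_state L Rp, [], []) 0
     HH HH0 Hc (Rle_refl 0) ltac:(intros []; reflexivity) ltac:(intros []; reflexivity)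
     (init_Inv L Rp d Sp c) (init_Inv2 L Rp) (init_Inv L Rp (d0 d) 1 0) (init_Rel L Rp)) as [HR [HI HI2]].
  unfold iteration_time. fold N. rewrite (sim_runI L Rp d Sp N (init_state L Rp) [] []).
  unfold Phi. fold N.
  destruct (runI L Rp d Sp N (init_state L Rp, [], [])) as [[st As] Bs].
  destruct (runI L Rp (d0 d) 1 N (init_state L Rp, [], [])) as [[st0 As0] Bs0].
  simpl fst. rewrite Rplus_0_l in HR. set (D := INR N * c) in *.
  assert (HD : 0 <= D) by (unfold D; pose proof (pos_INR N); nra).
  simpl in HR. destruct HR as [_ [_ [_ [_ [Hfc [Hfm [HAs HBs]]]]]]].
  simpl in HI. destruct HI as [_ [_ [H70 [_ [_ [HA [HP HV]]]]]]].
  simpl in HI2. destruct HI2 as [HS HR].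
  rewrite HW in HP, HV.
  set (W := beta d * G d) in *.
  assert (HW0 : 0 <= W) by (unfold W; nra).
  assert (Hqn : Forall (fun p => 0 <= snd p) (queue st)).
  { apply Forall_forall. intros p Hp. destruct HP as [_ [_ [_ Hm]]]. apply (Hm p Hp). }
  unfold final_time.
  set (T := Rmax (free_comp st) (flush (free_comm st) (queue st))).
  assert (HT1 : free_comp st <= T) by apply Rmax_l.
  assert (HT2 : flush (free_comm st) (queue st) <= T) by apply Rmax_r.
  split.
  - apply Rmax_lub; [lra|]. apply maxl_le; [lra|].
    intros x Hx. apply in_map_iff in Hx. destruct Hx as [tau [<- Htau]].
    assert (Htau' : tau <= T).
    { unfold Ev in Htau. destruct Htau as [<-|Htau]; [lra|]. apply in_app_or in Htau. destruct Htau as [Ht|Ht].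
      - destruct (pair_witness_rev D _ _ (Forall2_map_fst D _ _ HAs) tau Ht) as [s [Hs Hts]].
        apply in_map_iff in Hs. destruct Hs as [p [<- Hp]]. pose proof (HS p Hp).
        pose proof (flush_ge (queue st) (free_comm st) Hqn). lra.
      - destruct (pair_witness_rev D _ _ HBs tau Ht) as [r [Hr Htr]]. pose proof (HR r Hr). lra. }
    assert (LBx W As0 Bs0 tau <= LBx W As Bs tau).
    { unfold LBx. pose proof (SQ_pair_ge D As As0 tau HAs HA). pose proof (SB_pair_ge D W Bs Bs0 tau HW0 HBs). lra. }
    pose proof (HV tau). pose proof (flush_V (queue st) (free_comm st) tau Hqn).
    assert (Rmax (flush (free_comm st) (queue st)) tau <= T) by (apply Rmax_lub; lra). lra.
  - pose proof (flush_ub W As Bs (queue st) (free_comm st) HW0 HA HP).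
    assert (maxl (map (LBx W As Bs) (Ev As Bs)) <= maxl (map (LBx W As0 Bs0) (Ev As0 Bs0)) + D).
    { apply maxl_le; [pose proof (maxl_ge0 (map (LBx W As0 Bs0) (Ev As0 Bs0))); lra|].
      intros x Hx. apply in_map_iff in Hx. destruct Hx as [tau [<- Htau]].
      apply LBx_upper; auto. }
    pose proof (Rmax_l (free_comp st0) (maxl (map (LBx W As0 Bs0) (Ev As0 Bs0)))).
    pose proof (Rmax_r (free_comp st0) (maxl (map (LBx W As0 Bs0) (Ev As0 Bs0)))).
    unfold T. apply Rmax_lub; lra.
Qed.

Lemma lim_sq : forall (f : R -> R) l, (forall eps:posreal, exists delta:posreal, forall x, 0 < x < delta -> Rabs (f x - l) < eps) -> filterlim f (at_right 0) (locally l).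
Proof.
  intros f l H. apply filterlim_locally. intros eps. destruct (H eps) as [δ Hδ]. exists δ. intros y Hy Hpos.
  change (Rabs (f y - l) < eps). apply Hδ. change (Rabs (y - 0) < δ) in Hy. split; auto.
  rewrite Rminus_0_r, Rabs_pos_eq in Hy by lra. exact Hy.
Qed.

Theorem theorem2 (L Rp : nat) (d : durations) :
  (1 <= L)%nat -> (1 <= Rp)%nat ->
  0 < d_AT d -> 0 < d_E d -> 0 < d_D d -> 0 < d_C d -> 0 < beta d -> 0 < G d ->
  exists Tmin : R,
    filterlim (fun Sp => iteration_time L Rp d Sp) (at_right 0) (locally Tmin) /\
    (forall Sp : R, 0 < Sp -> Tmin <= iteration_time L Rp d Sp).
Proof.
  intros HL HRp H1 H2 H3 H4 Hb HG.
  exists (Phi L Rp d). split.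
  - apply lim_sq. intros eps.
    set (K := INR (4 * L * Rp + 1) * beta d + 1).
    assert (HK : 0 < K) by (unfold K; pose proof (pos_INR (4 * L * Rp + 1)); nra).
    assert (Hd : 0 < eps / K) by (apply Rdiv_lt_0_compat; [apply cond_pos|exact HK]).
    exists (mkposreal _ Hd). simpl. intros x [Hx0 Hx1].
    destruct (bounds L Rp d x Hx0 Hb HG H1 H2 H3 H4) as [A B].
    rewrite Rabs_pos_eq by lra.
    assert (x * K < eps).
    { apply (Rmult_lt_compat_r K) in Hx1; [|exact HK]. unfold Rdiv in Hx1.
      rewrite Rmult_assoc, Rinv_l, Rmult_1_r in Hx1 by lra. lra. }
    unfold K in H. pose proof (pos_INR (4 * L * Rp + 1)). nra.
  - intros Sp HSp. apply (bounds L Rp d Sp HSp Hb HG H1 H2 H3 H4).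
Qed.
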